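(* Let $0\le\mu<1$, $K>0$, and let $s:[0,\infty)\to[0,\infty)$ be a continuous function with $s(r)\le Kr^{\mu}$ for all sufficiently large $r$. Let $T:[0,\infty)\to[0,\infty)$ be a non-decreasing continuous function, let $\alpha<1$, and let $F\subset\mathbb{R}^+$ be the set of all $r$ such that $T(r)\le\alpha\,T(r+s(r))$. If $F$ has infinite logarithmic measure, i.e. $\int_{F\cap[1,\infty)}\frac{dt}{t}=\infty$, then $$\limsup_{r\to\infty}\frac{\log\log T(r)}{\log r}\ge 1-\mu.$$ *)

(* Defs.v *)
From Stdlib Require Import Reals Lra.
Open Scope R_scope.

Definition continuous_on_nonneg (f : R -> R) : Prop :=
  forall x, 0 <= x -> forall eps, 0 < eps ->
    exists delta, 0 < delta /\
      forall y, 0 <= y -> Rabs (y - x) < delta -> Rabs (f y - f x) < eps.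

(* The logarithmic (outer) measure of E, i.e. the outer measure w.r.t. dt/t,
   is infinite: every countable cover of E by open intervals (a n, b n)
   with 0 < a n <= b n has divergent total log-length
   sum_n int_{a n}^{b n} dt/t = sum_n ln (b n / a n). *)
Definition infinite_log_measure (E : R -> Prop) : Prop :=
  forall a b : nat -> R,
    (forall n, 0 < a n <= b n) ->
    (forall x, E x -> exists n, a n < x < b n) ->
    forall M, exists N, M < sum_f_R0 (fun n => ln (b n / a n)) N.

(* Main.v *)
Require Import Defs.
From Stdlib Require Import Reals Lra Classical ClassicalEpsilon.
Open Scope R_scope.

Lemma exp_le' x y : x <= y -> exp x <= exp y.
Proof. intros [H|H]; [left; apply exp_increasing; auto | subst; lra]. Qed.

Lemma ln_le' x y : 0 < x -> x <= y -> ln x <= ln y.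
Proof. intros Hx [H|H]; [left; apply ln_increasing; auto | subst; lra]. Qed.

Lemma ln_1_le y : -1 < y -> ln (1 + y) <= y.
Proof.
  intros Hy. apply Rle_trans with (ln (exp y)); [|rewrite ln_exp; lra].
  apply ln_le'. lra. apply exp_ineq1_le.
Qed.

Lemma ln_lb u : 0 <= u -> u / (1 + u) <= ln (1 + u).
Proof.
  intros Hu.
  assert (H := exp_ineq1_le (- (u / (1+u)))).
  assert (E : 1 + - (u / (1 + u)) = / (1 + u)) by (field; lra).
  rewrite E in H.
  assert (H2 : ln (/ (1+u)) <= - (u/(1+u))).
  { apply Rle_trans with (ln (exp (- (u/(1+u))))); [|rewrite ln_exp; lra].
    apply ln_le'. apply Rinv_0_lt_compat; lra. exact H. }
  rewrite ln_Rinv in H2 by lra. lra.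
Qed.

Lemma key_ineq x c d : 0 < c -> c <= x -> 0 < d ->
  d * c / (2 + d) * Rpower x (- (d + 1)) <= Rpower x (- d) - Rpower (x + c) (- d).
Proof.
  intros Hc Hx Hd. unfold Rpower.
  set (u := c / x).
  assert (Hx0 : 0 < x) by lra.
  assert (Hu0 : 0 < u) by (unfold u; apply Rdiv_lt_0_compat; lra).
  assert (Hu1 : u <= 1) by (unfold u; apply Rmult_le_reg_r with x; [lra|]; field_simplify; lra).
  assert (Exc : x + c = x * (1 + u)) by (unfold u; field; lra).
  rewrite Exc, ln_mult by lra.
  set (v := ln (1 + u)).
  assert (Hv : u / 2 <= v).
  { apply Rle_trans with (u / (1 + u)). apply Rmult_le_reg_r with (2 * (1+u)). nra.
    field_simplify; nra. apply ln_lb; lra. }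
  set (E := exp (- d * ln x)).
  assert (HE : 0 < E) by apply exp_pos.
  assert (E1 : exp (- (d + 1) * ln x) = E / x).
  { unfold E. replace (- (d + 1) * ln x) with (- d * ln x + - (ln x)) by ring.
    rewrite exp_plus, exp_Ropp, exp_ln by lra. field; lra. }
  assert (E2 : exp (- d * (ln x + v)) = E * / exp (d * v)).
  { unfold E. replace (- d * (ln x + v)) with (- d * ln x + - (d * v)) by ring.
    rewrite exp_plus, exp_Ropp. reflexivity. }
  rewrite E1, E2.
  assert (Hev : 1 + d * v <= exp (d * v)) by apply exp_ineq1_le.
  assert (Hdv : d * u / 2 <= d * v) by nra.
  assert (Hinv : / exp (d * v) <= / (1 + d * v)).
  { apply Rinv_le_contravar; nra. }
  assert (Hgoal : d * u / (2 + d) <= 1 - / exp (d * v)).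
  { apply Rle_trans with (1 - / (1 + d * v)); [|lra].
    apply Rmult_le_reg_r with ((2 + d) * (1 + d * v)). nra.
    field_simplify; try nra.
    assert (0 <= v) by lra.
    assert (0 <= d * d * v * (1 - u)) by (apply Rmult_le_pos; [apply Rmult_le_pos; nra | lra]).
    nra. }
  unfold u in Hgoal.
  apply Rle_trans with (E * (d * (c / x) / (2 + d))).
  right. field. lra.
  replace (E - E * / exp (d * v)) with (E * (1 - / exp (d*v))) by ring.
  apply Rmult_le_compat_l; lra.
Qed.

Definition Phi (d c C B L : R) : R :=
  C * Rpower (Rmax L c) (- d) + B * Rmax 0 ((2 * c - L) / c).
Definition wgt (d c L : R) : R := Rpower (Rmax L c) (- (d + 1)).

Lemma Phi_nonneg d c C B L : 0 <= C -> 0 <= B -> 0 <= Phi d c C B L.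
Proof.
  intros. unfold Phi, Rpower.
  assert (0 < exp (- d * ln (Rmax L c))) by apply exp_pos.
  assert (0 <= Rmax 0 ((2 * c - L) / c)) by apply Rmax_l.
  nra.
Qed.

Lemma Rpower_dec_base x y d : 0 < x -> x <= y -> 0 < d -> Rpower y (- d) <= Rpower x (- d).
Proof.
  intros. unfold Rpower. apply exp_le'.
  assert (ln x <= ln y) by (apply ln_le'; lra). nra.
Qed.

Lemma pot d c C B D L L' : 0 < c -> 0 < d -> 0 <= D ->
  D <= C * (d * c / (2 + d)) -> D * Rpower c (- (d + 1)) <= B -> 0 <= C -> 0 <= B ->
  L + c <= L' -> D * wgt d c L <= Phi d c C B L - Phi d c C B L'.
Proof.
  intros Hc Hd HD HC HB HC0 HB0 HL. unfold Phi, wgt.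
  destruct (Rle_dec c L) as [H1|H1].
  - rewrite (Rmax_left L c) by lra. rewrite (Rmax_left L' c) by lra.
    assert (K1 := key_ineq L c d Hc H1 Hd).
    assert (K2 := Rpower_dec_base (L + c) L' d ltac:(lra) HL Hd).
    assert (K3 : Rmax 0 ((2 * c - L') / c) <= Rmax 0 ((2 * c - L) / c)).
    { apply Rle_max_compat_l. unfold Rdiv. apply Rmult_le_compat_r.
      left; apply Rinv_0_lt_compat; lra. lra. }
    assert (P0 : 0 < Rpower L (- (d + 1))) by apply exp_pos.
    assert (D * Rpower L (- (d + 1)) <= C * (d * c / (2 + d)) * Rpower L (- (d + 1))) by nra.
    assert (C * (d * c / (2 + d) * Rpower L (- (d + 1))) <= C * (Rpower L (- d) - Rpower (L + c) (- d)))
      by (apply Rmult_le_compat_l; lra).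
    nra.
  - rewrite (Rmax_right L c) by lra.
    assert (K2 : Rpower (Rmax L' c) (- d) <= Rpower c (- d)).
    { apply Rpower_dec_base; auto. apply Rmax_r. }
    assert (E1 : Rmax 0 ((2 * c - L) / c) = (2 * c - L) / c).
    { apply Rmax_right. apply Rlt_le, Rdiv_lt_0_compat; lra. }
    assert (K3 : Rmax 0 ((2 * c - L') / c) <= (2 * c - L) / c - 1).
    { apply Rmax_lub.
      assert (1 < (2 * c - L) / c). { apply Rmult_lt_reg_r with c; auto. field_simplify; lra. }
      lra.
      apply Rmult_le_reg_r with c; auto. field_simplify; lra. }
    rewrite E1. nra.
Qed.

Lemma glb_ex (E : R -> Prop) g : (exists x, E x) -> (forall x, E x -> g <= x) ->
  exists m, g <= m /\ (forall x, E x -> m <= x) /\ (forall del, 0 < del -> exists x, E x /\ x < m + del).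
Proof.
  intros Hne Hlb.
  destruct (completeness (fun y => E (- y))) as [l [Hub Hl]].
  { exists (- g). intros y Hy. specialize (Hlb _ Hy). lra. }
  { destruct Hne as [x Hx]. exists (- x). rewrite Ropp_involutive. auto. }
  exists (- l). split; [|split].
  - assert (l <= - g). { apply Hl. intros y Hy. specialize (Hlb _ Hy). lra. } lra.
  - intros x Hx. assert (- x <= l). { apply Hub. rewrite Ropp_involutive. auto. } lra.
  - intros del Hdel. apply NNPP. intros Hn.
    assert (l <= l - del). { apply Hl. intros y Hy. apply Rnot_lt_le. intros Hy2.
      apply Hn. exists (- y). split; auto. lra. }
    lra.
Qed.

Lemma ilm_mono (E E' : R -> Prop) : (forall x, E x -> E' x) ->
  infinite_log_measure E -> infinite_log_measure E'.
Proof.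
  intros HE H a b Hab Hc. apply H; auto.
Qed.

Theorem lemma7
  (mu K alpha : R) (s T : R -> R)
  (Hmu : 0 <= mu < 1) (HK : 0 < K)
  (Hs_nonneg : forall r, 0 <= r -> 0 <= s r)
  (Hs_cont : continuous_on_nonneg s)
  (Hs_growth : exists R0, 0 < R0 /\ forall r, R0 <= r -> s r <= K * Rpower r mu)
  (HT_nonneg : forall r, 0 <= r -> 0 <= T r)
  (HT_mono : forall r1 r2, 0 <= r1 <= r2 -> T r1 <= T r2)
  (HT_cont : continuous_on_nonneg T)
  (HT_nontriv : exists r, 0 <= r /\ 0 < T r)
  (Halpha : alpha < 1)
  (HF : infinite_log_measure
          (fun r => 1 <= r /\ T r <= alpha * T (r + s r))) :
  forall eps, 0 < eps -> forall R1, exists r, R1 < r /\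
    (1 - mu) - eps < ln (ln (T r)) / ln r.
Proof.
  intros eps Heps R1. apply NNPP; intros Hneg.
  assert (Hbnd : forall r, R1 < r -> ln (ln (T r)) / ln r <= 1 - mu - eps).
  { intros r Hr. apply Rnot_lt_le. intros H. apply Hneg. exists r; auto. }
  clear Hneg.
  set (beta := Rmax (1 - mu - eps) ((1 - mu) / 2)).
  assert (Hb0 : 0 < beta) by (unfold beta; apply Rlt_le_trans with ((1-mu)/2); [lra | apply Rmax_r]).
  assert (Hb1 : beta < 1 - mu) by (unfold beta; apply Rmax_lub_lt; lra).
  set (R2 := Rmax R1 1).
  assert (Hgrow : forall r, R2 < r -> ln (T r) <= Rpower r beta).
  { intros r Hr.
    assert (HR1 : R1 < r) by (apply Rle_lt_trans with R2; [apply Rmax_l | auto]).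
    assert (Hr1 : 1 < r) by (apply Rle_lt_trans with R2; [apply Rmax_r | auto]).
    assert (Hlr : 0 < ln r) by (rewrite <- ln_1; apply ln_increasing; lra).
    specialize (Hbnd r HR1).
    assert (H1 : ln (ln (T r)) <= (1 - mu - eps) * ln r).
    { apply Rmult_le_reg_r with (/ ln r). apply Rinv_0_lt_compat; auto.
      replace ((1 - mu - eps) * ln r * / ln r) with (1 - mu - eps) by (field; lra). exact Hbnd. }
    assert (H2 : (1 - mu - eps) * ln r <= beta * ln r).
    { apply Rmult_le_compat_r; [lra | apply Rmax_l]. }
    unfold Rpower.
    destruct (Rlt_dec 0 (ln (T r))) as [Hp|Hp].
    - rewrite <- (exp_ln (ln (T r))) by auto. apply exp_le'. lra.
    - assert (0 < exp (beta * ln r)) by apply exp_pos. lra. }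
  clear Hbnd.
  set (alpha' := Rmax alpha (1/2)).
  assert (Ha1 : alpha' < 1) by (unfold alpha'; apply Rmax_lub_lt; lra).
  assert (Ha0 : 1/2 <= alpha') by (unfold alpha'; apply Rmax_r).
  set (c := - ln alpha').
  assert (Hc : 0 < c).
  { unfold c. assert (ln alpha' < ln 1) by (apply ln_increasing; lra). rewrite ln_1 in H. lra. }
  set (F' := fun r => 1 <= r /\ T r <= alpha' * T (r + s r)).
  assert (HF' : infinite_log_measure F').
  { apply (ilm_mono _ _) with (2 := HF). intros x Hx.
    destruct Hx as [Hx1 Hx2]. split; auto.
    assert (0 <= s x) by (apply Hs_nonneg; lra).
    assert (0 <= T (x + s x)) by (apply HT_nonneg; lra).
    assert (alpha <= alpha') by (unfold alpha'; apply Rmax_l). nra. }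
  clear HF.
  set (d := (1 - mu) / beta - 1).
  assert (Hd : 0 < d).
  { unfold d. assert (1 < (1 - mu) / beta). { apply Rmult_lt_reg_r with beta; auto.
      field_simplify; lra. } lra. }
  assert (Hd1 : d + 1 = (1 - mu) / beta) by (unfold d; ring).
  set (Rc := Rpower c (d + 1)).
  assert (HRc : 0 < Rc) by apply exp_pos.
  set (D := 3 + K * (1 + Rc)).
  assert (HD : 0 < D) by (unfold D; nra).
  set (C := D * (2 + d) / (d * c)).
  set (B := D * Rpower c (- (d + 1))).
  assert (HC : 0 <= C) by (unfold C; apply Rlt_le, Rdiv_lt_0_compat; nra).
  assert (HB : 0 <= B) by (unfold B; assert (0 < Rpower c (- (d+1))) by apply exp_pos; nra).
  assert (HDC : D <= C * (d * c / (2 + d))) by (right; unfold C; field; lra).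
  assert (HDB : D * Rpower c (- (d + 1)) <= B) by (right; reflexivity).
  set (P := fun g => Phi d c C B (ln (T g))).
  assert (HP0 : forall g, 0 <= P g) by (intros; apply Phi_nonneg; auto).
  destruct HT_nontriv as [r0 [Hr0 HTr0]].
  destruct Hs_growth as [R0 [HR0 HsR0]].
  set (G := Rmax (Rmax 1 R0) (Rmax r0 (R2 + 1))).
  assert (HG1 : 1 <= G) by (unfold G; eapply Rle_trans; [apply Rmax_l|]; apply Rmax_l).
  assert (HGR0 : R0 <= G) by (unfold G; eapply Rle_trans; [apply Rmax_r|]; apply Rmax_l).
  assert (HGr0 : r0 <= G) by (unfold G; eapply Rle_trans; [apply Rmax_l|]; apply Rmax_r).
  assert (HGR2 : R2 < G) by (unfold G; eapply Rlt_le_trans; [|eapply Rle_trans; [apply Rmax_r|apply Rmax_r]]; lra).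
  assert (HTpos : forall g, G <= g -> 0 < T g).
  { intros g Hg. apply Rlt_le_trans with (T r0); auto. apply HT_mono; lra. }
  set (spec := fun (g : R) (p : R * (R * R)) =>
    g <= snd (snd p) /\ 0 < fst p <= fst (snd p) /\
    (forall x, F' x -> g <= x -> x < snd (snd p) -> fst p < x < fst (snd p)) /\
    ln (fst (snd p) / fst p) <= P g - P (snd (snd p)) /\
    ((exists y, F' y /\ g <= y) -> ln (T g) + c <= ln (T (snd (snd p))))).
  assert (Hstep : forall g, exists p, G <= g -> spec g p).
  { intro g. destruct (classic (G <= g)) as [Hg|Hg];
      [| exists (1, (1, g)); intros; contradiction].
    destruct (classic (exists y, F' y /\ g <= y)) as [Hact|Hin].
    2:{ exists (1, (1, g)). intros _. unfold spec; simpl.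
        split; [lra|split; [lra|split; [intros; lra|split]]].
        replace (1/1) with 1 by field. rewrite ln_1. lra.
        intros; contradiction. }
    set (L := ln (T g)).
    assert (HTg := HTpos g Hg).
    set (eta := wgt d c L).
    assert (Heta : 0 < eta) by apply exp_pos.
    assert (Hee : 1 < exp eta) by (rewrite <- exp_0; apply exp_increasing; auto).
    assert (Hee' : exp (- eta) < 1) by (rewrite <- exp_0; apply exp_increasing; lra).
    assert (Hee0 : 0 < exp (- eta)) by apply exp_pos.
    destruct (glb_ex (fun y => F' y /\ g <= y) g Hact) as [m [Hgm [Hmlb Happ]]].
    { intros x [_ Hx]; auto. }
    assert (Hm0 : 0 < m) by lra.
    destruct (Happ (m * (exp eta - 1))) as [r [[Fr Hgr] Hrm]]. { nra. }
    assert (Hrm' : r < m * exp eta) by lra.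
    destruct Fr as [Hr1 HTr].
    assert (Hsr : 0 <= s r) by (apply Hs_nonneg; lra).
    assert (HsK : s r <= K * Rpower r mu) by (apply HsR0; lra).
    set (g' := r + s r).
    exists (m * exp (- eta), (g' * exp eta, g')). intros _. unfold spec; simpl.
    assert (HTgr : T g <= T r) by (apply HT_mono; lra).
    assert (Hprog : L + c <= ln (T g')).
    { assert (HTg' : T r / alpha' <= T g').
      { apply Rmult_le_reg_r with alpha'. lra. field_simplify; [|lra]. unfold g'; lra. }
      apply Rle_trans with (ln (T r / alpha')).
      2:{ apply ln_le'; auto. apply Rdiv_lt_0_compat; lra. }
      unfold Rdiv. rewrite ln_mult, ln_Rinv by (try apply Rinv_0_lt_compat; lra).
      unfold L, c. assert (ln (T g) <= ln (T r)) by (apply ln_le'; auto). lra. }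
    split; [unfold g'; lra|].
    split. { split. nra. apply Rle_trans with m. nra.
      apply Rle_trans with g'. assert (m <= r) by (apply Hmlb; split; auto; split; auto). unfold g'; lra.
      assert (0 < g') by (unfold g'; lra). nra. }
    split.
    { intros x Fx Hgx Hxg. assert (m <= x) by (apply Hmlb; auto).
      assert (0 < g') by (unfold g'; lra). split; nra. }
    split; [|intros _; exact Hprog].
    assert (Hrpos : 0 < r) by lra.
    assert (Hlnr : 0 <= ln r) by (rewrite <- ln_1; apply ln_le'; lra).
    assert (Eba : g' * exp eta / (m * exp (- eta)) = (1 + s r / r) * (r * (/ m * exp (eta + eta)))).
    { assert (0 < exp eta) by apply exp_pos.
      rewrite exp_Ropp, exp_plus. unfold g'. field. repeat split; lra. }
    rewrite Eba.
    assert (0 < 1 + s r / r) by (assert (0 <= s r / r) by (apply Rmult_le_pos; [lra|left; apply Rinv_0_lt_compat; lra]); lra).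
    assert (0 < / m) by (apply Rinv_0_lt_compat; lra).
    assert (0 < exp (eta + eta)) by apply exp_pos.
    assert (0 < / m * exp (eta + eta)) by (apply Rmult_lt_0_compat; lra).
    assert (0 < r * (/ m * exp (eta + eta))) by (apply Rmult_lt_0_compat; lra).
    rewrite ln_mult by lra. rewrite ln_mult by lra. rewrite ln_mult by lra.
    rewrite ln_Rinv by lra. rewrite ln_exp.
    assert (QH1 : ln (1 + s r / r) <= s r / r).
    { apply ln_1_le. assert (0 <= s r / r) by (apply Rmult_le_pos; [lra|left; apply Rinv_0_lt_compat; lra]); lra. }
    assert (QH2 : ln r <= ln m + eta).
    { assert (0 < exp eta) by apply exp_pos.
      apply Rle_trans with (ln (m * exp eta)). apply ln_le'; lra.
      rewrite ln_mult, ln_exp by lra. lra. }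
    assert (Erp : Rpower r (mu - 1) = Rpower r mu / r).
    { unfold Rpower. replace ((mu - 1) * ln r) with (mu * ln r + - ln r) by ring.
      rewrite exp_plus, exp_Ropp, exp_ln by lra. field; lra. }
    assert (QH3 : s r / r <= K * Rpower r (mu - 1)).
    { rewrite Erp. unfold Rdiv. rewrite <- Rmult_assoc. apply Rmult_le_compat_r.
      left; apply Rinv_0_lt_compat; lra. auto. }
    assert (QH4 : Rpower r (mu - 1) <= (1 + Rc) * eta).
    { unfold eta, wgt. destruct (Rle_dec c L) as [HcL|HcL].
      - rewrite Rmax_left by lra.
        assert (Hgr2 : R2 < r) by lra.
        assert (HL1 : L <= ln (T r)) by (apply ln_le'; auto).
        assert (HL2 := Hgrow r Hgr2).
        assert (HL3 : ln L <= beta * ln r).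
        { unfold Rpower in HL2. rewrite <- (ln_exp (beta * ln r)). apply ln_le'; lra. }
        assert (Rpower r (mu - 1) <= Rpower L (- (d + 1))).
        { unfold Rpower. apply exp_le'. rewrite Hd1.
          assert (Hq : 0 < (1 - mu) / beta) by (apply Rdiv_lt_0_compat; lra).
          apply Rle_trans with (- ((1 - mu) / beta) * (beta * ln r)).
          right; field; lra. nra. }
        assert (0 < Rpower L (- (d + 1))) by apply exp_pos. nra.
      - rewrite Rmax_right by lra.
        assert (E1 : Rc * Rpower c (- (d + 1)) = 1).
        { unfold Rc, Rpower. rewrite <- exp_plus.
          replace ((d + 1) * ln c + - (d + 1) * ln c) with 0 by ring. apply exp_0. }
        assert (Rpower r (mu - 1) <= 1).
        { unfold Rpower. apply Rle_trans with (exp 0); [apply exp_le'; nra | rewrite exp_0; lra]. }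
        assert (0 < Rpower c (- (d + 1))) by apply exp_pos. nra. }
    assert (QH5 := pot d c C B D L (ln (T g')) Hc Hd (Rlt_le _ _ HD) HDC HDB HC HB Hprog).
    unfold P. fold L. fold eta in QH5.
    assert (D * eta = 3 * eta + K * ((1 + Rc) * eta)) by (unfold D; ring).
    assert (K * Rpower r (mu - 1) <= K * ((1 + Rc) * eta)) by (apply Rmult_le_compat_l; lra).
    lra. }
  set (step := fun g => proj1_sig (constructive_indefinite_description _ (Hstep g))).
  assert (Hspec : forall g, G <= g -> spec g (step g)).
  { intros g Hg. exact (proj2_sig (constructive_indefinite_description _ (Hstep g)) Hg). }
  clearbody step. clear Hstep.
  set (gs := fix gs (n : nat) : R := match n with O => G | S k => snd (snd (step (gs k))) end).
  assert (HgsS : forall k, gs (S k) = snd (snd (step (gs k)))) by reflexivity.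
  assert (Hgs0 : gs O = G) by reflexivity.
  clearbody gs.
  assert (HgsG : forall n, G <= gs n).
  { induction n. rewrite Hgs0; lra. rewrite HgsS.
    destruct (Hspec _ IHn) as [H _]. lra. }
  set (A := fun n => match n with O => 1/2 | S k => fst (step (gs k)) end).
  set (Bn := fun n => match n with O => G + 1 | S k => fst (snd (step (gs k))) end).
  assert (HAB : forall n, 0 < A n <= Bn n).
  { intros [|k]; simpl. lra. destruct (Hspec _ (HgsG k)) as [_ [H _]]. exact H. }
  assert (Hcov : forall x, F' x -> exists n, A n < x < Bn n).
  { intros x Fx.
    destruct (Rlt_dec x G) as [HxG|HxG].
    { exists O. simpl. destruct Fx. lra. }
    assert (Hch : forall N, gs N <= x \/ exists k, gs k <= x < gs (S k)).
    { induction N. left; rewrite Hgs0; lra.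
      destruct IHN as [H|H]; [|right; auto].
      destruct (Rle_dec (gs (S N)) x) as [H2|H2]; [left; auto|right; exists N; lra]. }
    destruct (classic (exists k, gs k <= x < gs (S k))) as [[k Hk]|Hno].
    - exists (S k). simpl. destruct (Hspec _ (HgsG k)) as [_ [_ [H _]]].
      apply H; auto; try lra. rewrite <- HgsS. lra.
    - assert (Hall : forall N, gs N <= x).
      { intros N. destruct (Hch N) as [H|H]; auto. contradiction. }
      assert (Hln : forall N, ln (T G) + INR N * c <= ln (T (gs N))).
      { induction N. rewrite Hgs0; simpl; lra.
        rewrite S_INR, HgsS. destruct (Hspec _ (HgsG N)) as [_ [_ [_ [_ H]]]].
        assert (ln (T (gs N)) + c <= ln (T (snd (snd (step (gs N)))))).
        { apply H. exists x; split; auto. }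
        lra. }
      destruct (INR_archimed c (ln (T x) - ln (T G)) Hc) as [N HN].
      specialize (Hln N).
      assert (ln (T (gs N)) <= ln (T x)).
      { apply ln_le'. apply HTpos, HgsG. apply HT_mono. split; [|apply Hall].
        specialize (HgsG N); lra. }
      lra. }
  destruct (HF' A Bn HAB Hcov (ln (2 * (G + 1)) + P G)) as [N HN].
  assert (Hsum : forall M, sum_f_R0 (fun n => ln (Bn n / A n)) M <= ln (2 * (G + 1)) + P G - P (gs M)).
  { clear HN. induction M.
    - simpl. replace ((G + 1) / (1 / 2)) with (2 * (G + 1)) by (field; lra). rewrite Hgs0; lra.
    - simpl sum_f_R0. destruct (Hspec _ (HgsG M)) as [_ [_ [_ [H _]]]].
      rewrite HgsS. simpl. lra. }
  specialize (Hsum N). specialize (HP0 (gs N)). lra.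
Qed.
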